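(* Let $\mathcal{M}=(E,\mathcal{I})$ be a matroid whose ground set $E$ is dependent, let $S\subseteq E$ be a dependent set, and let $T\subseteq S$. Then $$q_{S,\mathcal{M}}-q_{S\setminus T,\mathcal{M}}=\Pr_{\pi}\big[C_\pi\subseteq S \text{ and } C_\pi\cap T\neq\emptyset\big]\le p_{T,\mathcal{M}|_S},$$ where $\pi$ is a uniformly random permutation of $E$ on the left and in the middle, while $p_{T,\mathcal{M}|_S}$ is computed with respect to uniformly random permutations of $S$.
   Context: For a matroid $\mathcal{N}$ whose ground set $F$ is dependent and a permutation $\pi$ of $F$, $C_\pi$ denotes the first circuit formed when adding elements in the order of $\pi$: if the first $j$ elements of $\pi$ form an independent set but the first $j+1$ do not, $C_\pi$ is the unique circuit contained in the first $j+1$ elements. For $T\subseteq F$, the hitting probability is $p_{T,\mathcal{N}}=\Pr_\pi[C_\pi\cap T\neq\emptyset]$ and the circuit mass is $q_{T,\mathcal{N}}=\Pr_\pi[C_\pi\subseteq T]$, where $\pi$ is a uniformly random permutation of $F$. $\mathcal{M}|_S$ denotes the restriction of $\mathcal{M}$ to $S$ (independent sets are the independent sets of $\mathcal{M}$ contained in $S$). *)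

(* Defs.v *)
From mathcomp Require Import all_boot all_order all_algebra.
Set Implicit Arguments. Unset Strict Implicit. Unset Printing Implicit Defensive.
Import Order.TTheory GRing.Theory Num.Theory.

Record matroid (T : finType) := Matroid {
  ground : {set T};
  indep : {set T} -> bool;
  indep_sub : forall A, indep A -> A \subset ground;
  indep0 : indep set0;
  indep_hered : forall A B : {set T}, A \subset B -> indep B -> indep A;
  indep_exch : forall A B : {set T}, indep A -> indep B -> #|A| < #|B| ->
                 exists2 x, x \in B :\: A & indep (x |: A)
}.

Section Restriction.
Variables (T : finType) (M : matroid T) (S : {set T}).

Definition restr_indep (A : {set T}) : bool := indep M A && (A \subset S).

Lemma restr_indep_sub (A : {set T}) : restr_indep A -> A \subset S :&: ground M.
Proof.
by case/andP=> iA sAS; rewrite subsetI sAS (indep_sub iA).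
Qed.

Lemma restr_indep0 : restr_indep set0.
Proof. by rewrite /restr_indep indep0 sub0set. Qed.

Lemma restr_indep_hered (A B : {set T}) : A \subset B -> restr_indep B -> restr_indep A.
Proof.
move=> sAB /andP[iB sBS]; apply/andP; split.
  exact: indep_hered sAB iB.
exact: subset_trans sAB sBS.
Qed.

Lemma restr_indep_exch (A B : {set T}) : restr_indep A -> restr_indep B -> #|A| < #|B| ->
  exists2 x, x \in B :\: A & restr_indep (x |: A).
Proof.
move=> /andP[iA sAS] /andP[iB sBS] lt.
have [x xBA ixA] := indep_exch iA iB lt.
exists x => //; apply/andP; split => //.
rewrite subUset sAS andbT sub1set.
by move: xBA; rewrite inE => /andP[_ /(subsetP sBS)].
Qed.

Definition restrict : matroid T :=
  @Matroid T (S :&: ground M) restr_indep restr_indep_sub restr_indep0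
    restr_indep_hered restr_indep_exch.
End Restriction.

Section Circuits.
Variables (T : finType) (M : matroid T).

Definition circuit (C : {set T}) : bool :=
  ~~ indep M C && [forall D : {set T}, (D \proper C) ==> indep M D].

(* For an ordering s of the ground set, the shortest dependent prefix
   (as a set): the first k such that the first k elements are dependent. *)
Definition first_dep_prefix (s : seq T) : {set T} :=
  [set x in take (find (fun k => ~~ indep M [set y in take k s])
                        (iota 0 (size s).+1)) s].

(* C_pi : the (unique) circuit contained in that prefix. *)
Definition Cpi (s : seq T) : {set T} :=
  odflt set0 [pick C : {set T} | circuit C && (C \subset first_dep_prefix s)].

Definition orderings : seq (seq T) := permutations (enum (ground M)).

Definition Pr (E : pred (seq T)) : rat :=
  ((count E orderings)%:R / (size orderings)%:R)%R.

Definition hitp (A : {set T}) : rat := Pr (fun s => Cpi s :&: A != set0).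
Definition massq (A : {set T}) : rat := Pr (fun s => Cpi s \subset A).
End Circuits.

(* Main.v *)
Require Import Defs.
From mathcomp Require Import all_boot all_order all_algebra zify.
Import Order.TTheory GRing.Theory Num.Theory.
Set Implicit Arguments. Unset Strict Implicit. Unset Printing Implicit Defensive.

Lemma count_perms_cons (X : eqType) (P : pred (seq X)) s :
  uniq s -> 0 < size s ->
  count P (permutations s) = \sum_(x <- s) count (fun t => P (x :: t)) (permutations (rem x s)).
Proof.
move=> us ns; rewrite (permP (permutationsE ns)) count_flatten undup_id //.
rewrite sumnE !big_map. apply: eq_bigr => x _; by rewrite count_map.
Qed.

Lemma filter_rem_comm (X : eqType) (a : pred X) x s : uniq s ->
  filter a (rem x s) = rem x (filter a s).
Proof.
move=> us; rewrite rem_filter // rem_filter ?filter_uniq // -!filter_predI.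
by apply: eq_filter => y /=; rewrite andbC.
Qed.

Lemma count_perms_filter (X : eqType) (a : pred X) n : forall (s : seq X) (Q : pred (seq X)),
  size s = n -> uniq s ->
  count (fun t => Q (filter a t)) (permutations s) * (size (filter a s))`!
  = count Q (permutations (filter a s)) * n`!.
Proof.
elim: n => [|n IH] s Q.
  by case: s.
move=> ns us.
set k := size (filter a s); set R := count Q (permutations (filter a s)).
rewrite count_perms_cons // ?ns // big_distrl /=.
pose h x := count (fun u => Q (x :: u)) (permutations (rem x (filter a s))).
rewrite (eq_big_seq (fun x => (if a x then k * h x else R) * n`!)); last first.
  move=> x xs /=.
  have urs : uniq (rem x s) by apply: rem_uniq.
  have srs : size (rem x s) = n by rewrite size_rem // ns.
  case ax: (a x).
    have := IH (rem x s) (fun u => Q (x :: u)) srs urs.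
    rewrite filter_rem_comm // size_rem; last by rewrite mem_filter ax.
    have kp : 0 < k by rewrite /k size_filter -has_count; apply/hasP; exists x.
    rewrite -/k => E.
    by rewrite -(prednK kp) factS mulnCA E mulnA.
  have := IH (rem x s) Q srs urs.
  have nx : x \notin filter a s by rewrite mem_filter ax.
  rewrite filter_rem_comm // (rem_id nx) -/k -/R => <-.
  by [].
rewrite -big_distrl /= (bigID a) /=.
rewrite (eq_bigr (fun x => k * h x)); last by move=> x ->.
rewrite [X in _ + X](eq_bigr (fun x => R)); last by move=> x ax; rewrite (negbTE ax).
rewrite -big_distrr /= -big_filter big_const_seq iter_addn_0.
have -> : \sum_(i <- filter a s) h i = if k == 0 then 0 else R.
  case: eqP => k0.
    by move: k0; rewrite /k => /size0nil ->; rewrite big_nil.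
  rewrite /R count_perms_cons ?filter_uniq //; last by rewrite lt0n; apply/eqP.
have cc := count_predC a s.
rewrite -size_filter -/k ns in cc.
rewrite (_ : count (fun i => ~~ a i) s = count (predC a) s) //.
rewrite factS; case: eqP => k0; nia.
Qed.

Lemma fdpP (T : finType) (M : matroid T) (s : seq T) :
  ~~ indep M [set y in s] ->
  exists2 j, j <= size s &
   [/\ first_dep_prefix M s = [set x in take j s],
       ~~ indep M [set x in take j s] &
       forall k, k < j -> indep M [set x in take k s]].
Proof.
move=> dep.
set f := (fun k => ~~ indep M [set y in take k s]).
have hf : has f (iota 0 (size s).+1).
  apply/hasP; exists (size s). by rewrite mem_iota add0n ltnS leqnn.
  by rewrite /f take_size.
have lt := hf; rewrite has_find size_iota in lt.
exists (find f (iota 0 (size s).+1)); first by [].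
split.
- by [].
- by have := nth_find 0 hf; rewrite nth_iota.
- move=> k kj; have := before_find 0 kj.
  rewrite nth_iota ?add0n; last by apply: ltn_trans lt.
  by rewrite /f => /negbFE.
Qed.

Lemma pick_first (T : finType) (P Q : pred T) x :
  subpred Q P -> [pick y | P y] = Some x -> Q x -> [pick y | Q y] = Some x.
Proof.
move=> QP; rewrite /pick /enum_mem.
elim: (Finite.enum T) => //= y l IH.
rewrite /= !unfold_in /=.
case Py: (P y) => /=.
  by move=> [<-] ->.
have -> : Q y = false by apply/negbTE/negP => /QP; rewrite Py.
exact: IH.
Qed.

Lemma circuit_restr (T : finType) (M : matroid T) (S C : {set T}) :
  C \subset S -> circuit (restrict M S) C = circuit M C.
Proof.
move=> sCS; rewrite /circuit /= /restr_indep sCS andbT; congr (_ && _).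
apply: eq_forallb => D; case: (boolP (D \proper C)) => //= pDC.
by rewrite (subset_trans (proper_sub pDC) sCS) andbT.
Qed.

Lemma dep_super (T : finType) (M : matroid T) (A B : {set T}) :
  A \subset B -> ~~ indep M A -> ~~ indep M B.
Proof. by move=> sAB; apply: contra => /(indep_hered sAB). Qed.

Lemma Cpi_restr (T : finType) (M : matroid T) (S : {set T}) (s : seq T) :
  ~~ indep M [set y in s] -> Cpi M s \subset S -> Cpi M s != set0 ->
  Cpi (restrict M S) (filter (mem S) s) = Cpi M s.
Proof.
move=> dep.
have [j js [Hfd Hdep Hind]] := fdpP dep.
rewrite /Cpi; case E: [pick C : {set T} | circuit M C && (C \subset first_dep_prefix M s)] => [C0|] /=; last by rewrite eqxx.
move=> C0S _.
have /andP[cC0 C0P] : circuit M C0 && (C0 \subset first_dep_prefix M s).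
  by move: (E); case: pickP => // C' HC' [<-].
rewrite Hfd in C0P.
have j0 : 0 < j.
  case: j {js Hfd Hind} Hdep C0P => // /=.
  by rewrite take0 (_ : [set x in [::]] = set0) ?indep0 //; apply/setP => x; rewrite !inE.
set sS := filter (mem S) s.
set m := size (filter (mem S) (take j s)).
have tm : take m sS = filter (mem S) (take j s).
  by rewrite /sS -{1}(cat_take_drop j s) filter_cat take_size_cat.
have C0dep : ~~ indep M C0 by case/andP: cC0.
have C0sub : C0 \subset [set x in take m sS].
  apply/subsetP => x xC; rewrite tm inE mem_filter.
  apply/andP; split; first exact: (subsetP C0S). by have := subsetP C0P x xC; rewrite inE.
have depS : ~~ indep (restrict M S) [set y in sS].
  rewrite /= /restr_indep negb_and; apply/orP; left; apply: (dep_super _ C0dep).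
  apply: (subset_trans C0sub); apply/subsetP => x; rewrite !inE; exact: mem_take.
have [j' js' [Hfd' Hdep' Hind']] := fdpP depS.
have jm : j' = m.
  apply/eqP; rewrite eqn_leq; apply/andP; split.
    rewrite leqNgt; apply/negP => mj.
    have := Hind' m mj; rewrite /= /restr_indep => /andP[+ _].
    by apply/negP/(dep_super C0sub).
  rewrite leqNgt; apply/negP => jm.
  have [x0 _] : exists2 x0 : T, true & true.
    by move: js j0; case: (s) => [|x0 ?] /=; [lia | exists x0].
  have tj : take j s = rcons (take j.-1 s) (nth x0 s j.-1).
    by rewrite -(take_nth x0) ?prednK //; lia.
  set u := filter (mem S) (take j.-1 s).
  have mu : m <= (size u).+1.
    by rewrite /m tj filter_rcons; case: ifP => _; rewrite ?size_rcons.
  have ju : j' <= size u by lia.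
  have tu : take j' sS = take j' u.
    by rewrite /sS -{1}(cat_take_drop j.-1 s) filter_cat takel_cat.
  have iu : indep M [set x in take j.-1 s] by apply: Hind; lia.
  move: Hdep'; rewrite /= /restr_indep => /negP _H _; apply: _H; apply/andP; split.
    apply: (indep_hered _ iu); apply/subsetP => x; rewrite !inE tu => /mem_take.
    by rewrite mem_filter => /andP[].
  apply/subsetP => x; rewrite !inE => /mem_take.
  by rewrite mem_filter => /andP[].
rewrite Hfd' jm tm.
rewrite (pick_first (P := fun C => circuit M C && (C \subset first_dep_prefix M s)) _ E) //.
  move=> C /andP[cC sCP].
  have sCS : C \subset S.
    apply/subsetP => x /(subsetP sCP); rewrite inE mem_filter => /andP[].
    by [].
  rewrite circuit_restr // in cC; rewrite cC Hfd /=.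
  apply: (subset_trans sCP); apply/subsetP => x; rewrite !inE mem_filter.
  by case/andP.
rewrite circuit_restr // cC0 /= -tm //.
Qed.

Lemma count_sub_in (X : eqType) (a b : pred X) (l : seq X) :
  (forall x, x \in l -> a x -> b x) -> count a l <= count b l.
Proof.
elim: l => //= x l IH H.
have IH' : count a l <= count b l by apply: IH => y yl; apply: H; rewrite inE yl orbT.
case ax: (a x) => /=.
  by rewrite (H x (mem_head _ _) ax) /= ltnS.
by apply: leq_trans IH' (leq_addl _ _).
Qed.

Lemma count_split3 (X : Type) (a b c : pred X) (l : seq X) :
  (forall x, (a x : nat) = b x + c x) -> count a l = count b l + count c l.
Proof.
move=> H; elim: l => //= x l ->; rewrite H; lia.
Qed.

Theorem mainTheorem5 (T : finType) (M : matroid T) (S A : {set T}) :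
  ~~ indep M (ground M) ->
  S \subset ground M -> ~~ indep M S -> A \subset S ->
  (massq M S - massq M (S :\: A))%R
    = Pr M (fun s => (Cpi M s \subset S) && (Cpi M s :&: A != set0))
  /\ (Pr M (fun s => (Cpi M s \subset S) && (Cpi M s :&: A != set0))
       <= hitp (restrict M S) A)%R.
Proof.
move=> depE sSE depS sAS; split.
  rewrite /massq /Pr.
  rewrite (@count_split3 _ (fun s => Cpi M s \subset S) (fun s => Cpi M s \subset S :\: A)
    (fun s => (Cpi M s \subset S) && (Cpi M s :&: A != set0))); last first.
    move=> t; rewrite subsetD setI_eq0.
    by case: (Cpi M t \subset S); case: [disjoint Cpi M t & A].
  by rewrite natrD mulrDl addrAC subrr add0r.
rewrite /Pr /hitp /orderings /=.
set E := ground M.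
have fe : filter (mem S) (enum E) = enum (S :&: E).
  rewrite /enum_mem -filter_predI; apply: eq_filter => x /=.
  by rewrite !inE.
set Q := fun t => Cpi (restrict M S) t :&: A != set0.
have le1 : count (fun s => (Cpi M s \subset S) && (Cpi M s :&: A != set0)) (permutations (enum E))
         <= count (fun t => Q (filter (mem S) t)) (permutations (enum E)).
  apply: count_sub_in => t; rewrite mem_permutations => ht /andP[sS hA].
  have sE : [set y in t] = E by apply/setP => y; rewrite inE (perm_mem ht) mem_enum.
  have n0 : Cpi M t != set0.
    by apply: contraNneq hA => ->; rewrite set0I.
  by rewrite /Q Cpi_restr // sE.
have eq2 := count_perms_filter (mem S) Q (erefl (size (enum E))) (enum_uniq (mem E)).
rewrite fe in eq2.
rewrite !size_permutations ?enum_uniq //.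
apply: (@le_trans _ _ ((count (fun t => Q (filter (mem S) t)) (permutations (enum E)))%:R / (size (enum E))`!%:R)%R).
  by rewrite ler_wpM2r ?invr_ge0 ?ler0n // ler_nat.
rewrite le_eqVlt; apply/orP; left; apply/eqP.
rewrite /Pr /orderings /= size_permutations ?enum_uniq //.
apply/eqP; rewrite eqr_div. rewrite -!natrM eqr_nat. rewrite -/E; apply/eqP; exact: eq2.
  by rewrite pnatr_eq0 -lt0n fact_gt0.
by rewrite pnatr_eq0 -lt0n fact_gt0.
Qed.
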